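(* Fix $b\in\mathbb{N}$. For $(r,s)\in L=\mathbb{N}\times\mathbb{N}$ define \[ \Lambda(r,s)=|\{(n,m)\in L : (n,m)\text{ is } b\text{-visible and } |n-r|+|m-s|=1\}|. \] Then the mean value $M(\Lambda)$ exists and $M(\Lambda)=\dfrac{4}{\zeta(b+1)}$, where $\zeta$ is the Riemann zeta function.
   Context: For $r,s\in\mathbb{N}$, $\gcd_b(r,s)=\max\{k\in\mathbb{N} : k\mid r \text{ and } k^b\mid s\}$; $(r,s)$ is $b$-visible if $\gcd_b(r,s)=1$. The mean value of $\Lambda:L\to\mathbb{C}$ is $M(\Lambda)=\lim_{N\to\infty}\frac{1}{N^2}\sum_{0<r,s\le N}\Lambda(r,s)$. *)

(* Defs.v *)
From HB Require Import structures.
From mathcomp Require Import all_boot all_order all_algebra.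
From mathcomp Require Import all_classical all_reals topology normedtype sequences.
Set Implicit Arguments. Unset Strict Implicit. Unset Printing Implicit Defensive.
Import Order.TTheory GRing.Theory Num.Theory.
Import numFieldNormedType.Exports.
Local Open Scope ring_scope.

(* gcd_b(r,s) = max { k in N : k | r and k^b | s }  (for r >= 1 the
   candidates k satisfy 1 <= k <= r; k = 0 is never a divisor of r > 0). *)
Definition gcdb (b r s : nat) : nat :=
  (\max_(k < r.+1 | (k %| r) && (k ^ b %| s)) k)%N.

Definition bvisible (b r s : nat) : bool := gcdb b r s == 1%N.

(* Lambda(r,s): number of b-visible (n,m) in N x N (N = {1,2,...}) with
   |n - r| + |m - s| = 1.  Such points satisfy n <= r+1, m <= s+1. *)
Definition Lambda (b r s : nat) : nat :=
  #|[set p : 'I_(r.+2) * 'I_(s.+2) |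
      [&& (0 < p.1)%N, (0 < p.2)%N, bvisible b p.1 p.2
        & (`|(p.1 : nat) - r|%N + `|(p.2 : nat) - s|%N == 1)%N]]|.

Definition mean_seq {R : realType} (b : nat) (N : nat) : R :=
  (N%:R ^+ 2)^-1 * \sum_(1 <= r < N.+1) \sum_(1 <= s < N.+1) (Lambda b r s)%:R.

Definition zeta {R : realType} (s : nat) : R :=
  limn (series (fun n : nat => ((n.+1)%:R ^+ s)^-1 : R) : R^nat).

(* Main.v *)
Require Import Defs.
From HB Require Import structures.
From mathcomp Require Import all_boot all_order all_algebra.
From mathcomp Require Import all_classical all_reals topology normedtype sequences.
From mathcomp Require Import zify ring lra.
Set Implicit Arguments. Unset Strict Implicit. Unset Printing Implicit Defensive.
Import Order.TTheory GRing.Theory Num.Theory.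
Import numFieldNormedType.Exports.
Local Open Scope classical_set_scope.
Local Open Scope ring_scope.

Section NT.
Local Open Scope nat_scope.
Variable b : nat.
Hypothesis hb : 0 < b.

Definition qual r s k := (k %| r) && (k ^ b %| s).

Lemma gcdb_spec r s g : 0 < r -> qual r s g ->
  (forall k, qual r s k -> k <= g) -> gcdb b r s = g.
Proof.
move=> r0 qg hk.
have gr : g < r.+1 by rewrite ltnS; apply: dvdn_leq => //; case/andP: qg.
apply/eqP; rewrite eqn_leq; apply/andP; split.
- apply/bigmax_leqP => i /= qi; exact: hk.
- exact: (leq_bigmax_cond (Ordinal gr)).
Qed.

Lemma gcdb_max r s k : 0 < r -> qual r s k -> k <= gcdb b r s.
Proof.
move=> r0 qk.
have kr : k < r.+1 by rewrite ltnS; apply: dvdn_leq => //; case/andP: qk.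
exact: (leq_bigmax_cond (Ordinal kr)).
Qed.

Lemma gcdb_qual r s : 0 < r -> qual r s (gcdb b r s).
Proof.
move=> r0.
have := @eq_bigmax_cond _ [pred k : 'I_r.+1 | qual r s k] (fun k => nat_of_ord k).
case.
  apply/card_gt0P; exists (Ordinal (r0 : 1 < r.+1)).
  by rewrite inE /qual /= dvd1n exp1n dvd1n.
move=> i0; rewrite inE => qi e.
rewrite /gcdb.
have -> : \max_(k < r.+1 | (k %| r) && (k ^ b %| s)) k = \max_(i in [pred k : 'I_r.+1 | qual r s k]) i.
  by apply: eq_bigl => k; rewrite inE.
by rewrite e.
Qed.

Lemma qual1 r s : qual r s 1.
Proof. by rewrite /qual dvd1n exp1n dvd1n. Qed.

Lemma qual_gt0 r s k : 0 < r -> qual r s k -> 0 < k.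
Proof. by move=> r0 /andP[/dvdn_gt0 ->]. Qed.

Lemma visP r s : 0 < r -> bvisible b r s -> forall k, qual r s k -> k <= 1.
Proof. by move=> r0 /eqP <- k; apply: gcdb_max. Qed.

Lemma visI r s : 0 < r -> (forall k, qual r s k -> k <= 1) -> bvisible b r s.
Proof. by move=> r0 h; apply/eqP; apply: gcdb_spec => //; apply: qual1. Qed.

Lemma gcdb_gt0 r s : 0 < r -> 0 < gcdb b r s.
Proof. by move=> r0; apply: (leq_trans _ (gcdb_max r0 (qual1 r s))). Qed.

Lemma gcdb_le r s : 0 < r -> gcdb b r s <= r.
Proof. by move=> r0; case/andP: (gcdb_qual s r0) => /dvdn_leq ->. Qed.

Lemma gcdb_eq r s d : 0 < r -> 0 < d ->
  (gcdb b r s == d) = [&& d %| r, d ^ b %| s & bvisible b (r %/ d) (s %/ d ^ b)].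
Proof.
move=> r0 d0; apply/idP/idP.
- move/eqP=> gd; have := gcdb_qual s r0; rewrite gd => /andP[dr ds].
  rewrite dr ds /=.
  have r'0 : 0 < r %/ d by rewrite divn_gt0 // dvdn_leq.
  apply: visI => // k /andP[kr ks].
  have : qual r s (k * d).
    rewrite /qual -(divnK dr) dvdn_pmul2r // kr /= expnMn.
    by rewrite -(divnK ds) dvdn_pmul2r ?expn_gt0 ?d0.
  move/(gcdb_max r0); rewrite gd => h.
  by rewrite -(leq_pmul2r d0) mul1n.
- case/and3P=> dr ds vis.
  have r'0 : 0 < r %/ d by rewrite divn_gt0 // dvdn_leq.
  apply/eqP; apply: gcdb_spec => //; first by rewrite /qual dr ds.
  move=> k /andP[kr ks].
  have k0 : 0 < k by apply: dvdn_gt0 kr.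
  set g := gcdn k d.
  have g0 : 0 < g by rewrite gcdn_gt0 k0.
  have cop : coprime (k %/ g) (d %/ g) 
    by rewrite /coprime -(eqn_pmul2r g0) mul1n muln_gcdl !divnK ?dvdn_gcdl ?dvdn_gcdr.
  have ek : k = k %/ g * g by rewrite divnK // dvdn_gcdl.
  have ed : d = d %/ g * g by rewrite divnK // dvdn_gcdr.
  have er : r = r %/ d * (d %/ g) * g by rewrite -mulnA -ed divnK.
  have es : s = s %/ d ^ b * (d %/ g) ^ b * g ^ b by rewrite -mulnA -expnMn -ed divnK.
  have h1 : k %/ g %| r %/ d.
    move: kr; rewrite {1}er {1}ek dvdn_pmul2r // => kr.
    by rewrite (Gauss_dvdl _ cop) in kr.
  have h2 : (k %/ g) ^ b %| s %/ d ^ b.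
    move: ks; rewrite {1}es {1}ek expnMn dvdn_pmul2r ?expn_gt0 ?g0 // => ks.
    by rewrite (Gauss_dvdl _ (coprimeXr _ (coprimeXl _ cop))) in ks.
  have : k %/ g <= 1 by apply: (visP r'0 vis); rewrite /qual h1 h2.
  have : 0 < k %/ g by rewrite divn_gt0 // dvdn_leq // dvdn_gcdl.
  move=> h3 h4; have e1 : k %/ g = 1 by apply/eqP; rewrite eqn_leq h4 h3.
  rewrite ek e1 mul1n; apply: dvdn_leq => //; exact: dvdn_gcdr.
Qed.

Definition V x y := \sum_(1 <= n < x.+1) \sum_(1 <= m < y.+1) (bvisible b n m : nat).

Lemma sum_mult d x (f : nat -> nat) : 0 < d ->
  \sum_(1 <= n < x.+1) (if d %| n then f (n %/ d) else 0) = \sum_(1 <= k < (x %/ d).+1) f k.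
Proof.
move=> d0; elim: x => [|x IH]; first by rewrite div0n !big_geq.
rewrite big_nat_recr //= IH divnS //.
case: (d %| x.+1) => /=; last by rewrite addn0 add0n.
by rewrite add1n [in RHS]big_nat_recr.
Qed.

Lemma sum_ind g U : \sum_(1 <= d < U.+1) (g == d : nat) = ((0 < g) && (g <= U) : nat).
Proof.
elim: U => [|U IH]; first by rewrite big_geq //; case: g.
rewrite big_nat_recr //= IH.
case H1: (0 < g); case H2: (g <= U); case H3: (g == U.+1); case H4: (g <= U.+1) => /=; lia.
Qed.

Lemma count_id x y U : x <= U -> x * y = \sum_(1 <= d < U.+1) V (x %/ d) (y %/ d ^ b).
Proof.
move=> xU.
transitivity (\sum_(1 <= n < x.+1) \sum_(1 <= m < y.+1) 1).
  rewrite (eq_bigr (fun _ => y)); last by move=> n _; rewrite sum_nat_const_nat subn1 muln1.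
  by rewrite sum_nat_const_nat subn1.
transitivity (\sum_(1 <= n < x.+1) \sum_(1 <= m < y.+1) \sum_(1 <= d < U.+1) (gcdb b n m == d : nat)).
  apply: eq_big_nat => n /andP[n1 nx]; apply: eq_big_nat => m _.
  rewrite sum_ind gcdb_gt0 //=.
  by rewrite (leq_trans (gcdb_le _ n1)) // (leq_trans _ xU) // -ltnS.
rewrite (eq_bigr (fun n => \sum_(1 <= d < U.+1) \sum_(1 <= m < y.+1) (gcdb b n m == d : nat))); last first.
  by move=> n _; rewrite exchange_big_nat.
rewrite exchange_big_nat; apply: eq_big_nat => d /andP[d1 _].
rewrite /V -(sum_mult _ _ d1).
apply: eq_big_nat => n /andP[n1 _].
case dn: (d %| n); last first.
  by rewrite big1 // => m _; rewrite gcdb_eq // dn.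
have db : 0 < d ^ b by rewrite expn_gt0 d1.
rewrite -(sum_mult _ _ db).
apply: eq_big_nat => m _.
rewrite gcdb_eq // dn /=.
by case: (d ^ b %| m).
Qed.

Lemma V_le x y : V x y <= x * y.
Proof.
have -> : x * y = \sum_(1 <= n < x.+1) \sum_(1 <= m < y.+1) 1.
  rewrite (eq_bigr (fun _ => y)); last by move=> n _; rewrite sum_nat_const_nat subn1 muln1.
  by rewrite sum_nat_const_nat subn1.
apply: leq_sum => n _; apply: leq_sum => m _.
by case: bvisible.
Qed.

End NT.

Section Zeta.
Variable R : realType.
Variable b : nat.
Hypothesis hb : (0 < b)%N.
Local Notation s := b.+1.

Definition Z (D : nat) : R := \sum_(1 <= d < D.+1) (d%:R ^+ s)^-1.

Lemma term_le (k : nat) : (0 < k)%N -> ((k.+1)%:R ^+ s)^-1 <= k%:R^-1 - (k.+1)%:R^-1 :> R.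
Proof.
move=> k0.
have hk : k%:R != 0 :> R by rewrite pnatr_eq0 -lt0n.
have hk1 : k%:R + 1 != 0 :> R by rewrite natr1 pnatr_eq0.
have -> : k%:R^-1 - (k.+1)%:R^-1 = ((k * k.+1)%:R)^-1 :> R.
  by rewrite natrM -natr1; field; rewrite hk hk1.
rewrite -natrX lef_pV2 ?posrE ?ltr0n ?muln_gt0 ?expn_gt0 ?k0 //.
rewrite ler_nat expnS mulnC leq_mul //.
by rewrite (leq_trans (leqnSn k)) // -{1}[k.+1]expn1 leq_pexp2l.
Qed.

Lemma tail_le (D n : nat) : (0 < D)%N ->
  \sum_(D.+1 <= d < (D + n).+1) (d%:R ^+ s)^-1 <= D%:R^-1 - (D + n)%:R^-1 :> R.
Proof.
move=> D0; elim: n => [|n IH]; first by rewrite addn0 big_geq // subrr.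
rewrite addnS big_nat_recr /=; last by rewrite ltnS leq_addr.
have := term_le (_ : (0 < D + n)%N); rewrite addn_gt0 D0 => /(_ isT) h.
by apply: le_trans (lerD IH h) _; rewrite addrA subrK.
Qed.

Lemma Z_mono : {homo Z : m n / (m <= n)%N >-> m <= n}.
Proof.
move=> m n mn.
apply: (@nondecreasing_series R (fun d => (d%:R ^+ s)^-1) predT 1%N); last by rewrite ltnS.
by move=> k _ _; rewrite invr_ge0 exprn_ge0.
Qed.

Lemma Z_le D n : (0 < D)%N -> Z n <= Z D + D%:R^-1.
Proof.
move=> D0; case: (leqP n D) => h.
  have := Z_mono h; have : 0 <= D%:R^-1 :> R by rewrite invr_ge0.
  lra.
rewrite /Z (@big_cat_nat _ _ _ D.+1) //=; last by rewrite ltnW.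
rewrite -(subnKC (ltnW h)).
have := tail_le (n - D) D0.
have : 0 <= (D + (n - D))%:R^-1 :> R by rewrite invr_ge0.
lra.
Qed.

Definition zu (n : nat) : R := ((n.+1)%:R ^+ s)^-1.

Lemma seriesE n : series zu n = Z n.
Proof. by rewrite /series /= /Z big_add1. Qed.

Lemma zeta_cvg : cvgn (series zu).
Proof.
apply: nondecreasing_is_cvgn.
  by move=> m n mn; rewrite !seriesE Z_mono.
exists (Z 1 + 1) => _ [n _ <-]; rewrite seriesE.
by have := Z_le n (isT : (0 < 1)%N); rewrite invr1.
Qed.

Lemma Z_le_zeta D : Z D <= zeta s.
Proof.
rewrite -seriesE; apply: nondecreasing_cvgn_le; last exact: zeta_cvg.
by move=> m n mn; rewrite !seriesE Z_mono.
Qed.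

Lemma zeta_le D : (0 < D)%N -> zeta s <= Z D + D%:R^-1.
Proof.
move=> D0; apply: limr_le; first exact: zeta_cvg.
by apply: nearW => n; rewrite seriesE; apply: Z_le.
Qed.

Lemma Z1 : Z 1 = 1.
Proof. by rewrite /Z big_nat1 expr1n invr1. Qed.

Lemma zeta_ge1 : 1 <= zeta (R:=R) s.
Proof. by rewrite -Z1 Z_le_zeta. Qed.

Lemma Z_split D : (0 < D)%N -> Z D = 1 + \sum_(2 <= d < D.+1) (d%:R ^+ s)^-1.
Proof. by move=> D0; rewrite /Z big_ltn // expr1n invr1. Qed.

Lemma S2_le D : \sum_(2 <= d < D.+1) (d%:R ^+ s)^-1 <= 3/4 :> R.
Proof.
case: (leqP D 1) => h; first by rewrite big_geq //; lra.
rewrite big_ltn //.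
have := tail_le (D - 2) (isT : (0 < 2)%N); rewrite subnKC // => h1.
have h2 : (2%:R ^+ s)^-1 <= 1/4 :> R.
  rewrite div1r lef_pV2 ?posrE ?exprn_gt0 //.
  rewrite -natrX ler_nat expnS.
  have : (2 <= 2 ^ b)%N by rewrite -{1}(expn1 2) leq_pexp2l.
  lia.
have : 0 <= D%:R^-1 :> R by rewrite invr_ge0.
move: h1 h2. set A := \sum_(3 <= _ < _) _. set t := _ ^- s. set u := D%:R^-1.
lra.
Qed.

End Zeta.

Section Main.
Variable R : realType.
Variable b : nat.
Hypothesis hb : (0 < b)%N.
Local Notation s := b.+1.

Lemma Fp (x y d : nat) : (0 < d)%N ->
  ((x %/ d * (y %/ d ^ b))%:R : R) <= x%:R * y%:R * (d%:R ^+ s)^-1.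
Proof.
move=> d0; rewrite -natrM -natrX ler_pdivlMr ?ltr0n ?expn_gt0 ?d0 // -natrM ler_nat expnS.
by rewrite mulnACA; apply: leq_mul; apply: leq_trunc_div.
Qed.

Lemma Fq (x y d : nat) : (0 < d)%N ->
  x%:R * y%:R * (d%:R ^+ s)^-1 - ((x %/ d * (y %/ d ^ b))%:R : R) <= x%:R + y%:R.
Proof.
move=> d0; rewrite lerBlDr ler_pdivrMr ?exprn_gt0 ?ltr0n //.
rewrite -!natrM -natrX -!natrD -!natrM ler_nat.
have e0 : (0 < d ^ b)%N by rewrite expn_gt0 d0.
have := div.divn_eq x d; have := div.divn_eq y (d ^ b).
have := div.ltn_pmod x d0; have := div.ltn_pmod y e0.
rewrite expnS.
set q1 := (x %/ d)%N; set q2 := (y %/ d ^ b)%N; set r1 := (x %% d)%N; set r2 := (y %% d ^ b)%N; set e := (d ^ b)%N.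
move=> h1 h2 h3 h4.
clearbody q1 q2 r1 r2 e; subst x y.
have h5 : (r2 <= d * e)%N by nia.
have h6 : (r1 <= d * e)%N by nia.
have h7 : (q1 * d * r2 <= q1 * d * (d * e))%N by apply: leq_mul.
have h8 : (q2 * e * r1 <= q2 * e * (d * e))%N by apply: leq_mul.
have h9 : (r1 * r2 <= r1 * (d * e))%N by apply: leq_mul.
nia.
Qed.


Lemma sumr_ge0_nat (m n : nat) (F : nat -> R) :
  (forall i, (m <= i < n)%N -> 0 <= F i) -> 0 <= \sum_(m <= i < n) F i.
Proof. by move=> h; rewrite big_nat_cond; apply: sumr_ge0 => i /andP[hi _]; apply: h. Qed.

Definition c : R := (zeta (R:=R) s)^-1.

Lemma zeta_pos : 0 < zeta (R:=R) s.
Proof. by apply: lt_le_trans (zeta_ge1 R hb); rewrite ltr01. Qed.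

Lemma c_gt0 : 0 < c.
Proof. by rewrite invr_gt0 zeta_pos. Qed.

Lemma c_le1 : c <= 1.
Proof. by rewrite invf_le1 ?zeta_pos ?zeta_ge1. Qed.

Lemma cz : c * zeta s = 1.
Proof. by rewrite mulVf // gt_eqF // zeta_pos. Qed.

Definition P (t : R) (K : nat) := forall x y : nat, (K <= x)%N -> (K <= y)%N ->
  `|(V b x y)%:R - c * x%:R * y%:R| <= t * x%:R * y%:R.

Lemma step t K D x y : 0 <= t -> P t K -> (2 <= D)%N -> (K * D ^ b <= x)%N -> (K * D ^ b <= y)%N ->
  `|(V b x y)%:R - c * x%:R * y%:R| <=
     3/4 * t * (x%:R * y%:R) + 2 * (x%:R * y%:R) / D%:R + D%:R * (x%:R + y%:R).
Proof.
move=> t0 HP D2 Kx Ky.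
have D0 : (0 < D)%N by apply: leq_trans D2.
pose a d := ((V b (x %/ d) (y %/ d ^ b))%:R : R).
pose p d := (((x %/ d) * (y %/ d ^ b))%N%:R : R).
pose U := maxn x D.
have hid : x%:R * y%:R = (V b x y)%:R + \sum_(2 <= d < D.+1) a d + \sum_(D.+1 <= d < U.+1) a d.
  rewrite -natrM (count_id hb y (leq_maxl x D)) natr_sum.
  rewrite big_ltn; last by rewrite ltnS (leq_trans _ (leq_maxr x D)) // ltnW.
  rewrite (@big_cat_nat _ _ _ D.+1) //=; last by rewrite ltnS leq_maxr.
  by rewrite divn1 exp1n divn1 addrA.
have Fa d : (0 < d)%N -> 0 <= a d <= p d.
  by move=> _; rewrite ler0n ler_nat V_le.
have F4 d : (2 <= d <= D)%N -> `|a d - c * p d| <= t * p d.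
  case/andP=> d2 dD; have d0 : (0 < d)%N by apply: leq_trans d2.
  have DDb : (D <= D ^ b)%N by rewrite -{1}[D]expn1 leq_pexp2l.
  have := HP (x %/ d)%N (y %/ d ^ b)%N.
  rewrite /a /p natrM !mulrA; apply.
    rewrite leq_divRL //; apply: leq_trans Kx; rewrite leq_mul2l.
    by rewrite (leq_trans dD DDb) orbT.
  rewrite leq_divRL ?expn_gt0 ?d0 //; apply: leq_trans Ky; rewrite leq_mul2l.
  by rewrite leq_exp2r // dD orbT.
have XY0 : 0 <= x%:R * y%:R :> R by rewrite mulr_ge0.
have hT : 0 <= \sum_(D.+1 <= d < U.+1) a d <= x%:R * y%:R / D%:R.
  apply/andP; split; first by apply: sumr_ge0 => d _; rewrite ler0n.
  apply: le_trans (_ : \sum_(D.+1 <= d < U.+1) x%:R * y%:R * (d%:R ^+ s)^-1 <= _).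
    apply: ler_sum_nat => d /andP[dD _].
    have d0 : (0 < d)%N by apply: leq_trans dD.
    by apply: le_trans (Fp _ _ d0); case/andP: (Fa d d0).
  rewrite -mulr_sumr ler_wpM2l //.
  have UD : U = (D + (U - D))%N by rewrite subnKC // leq_maxr.
  rewrite [X in \sum_(_ <= _ < X.+1) _]UD.
  have := tail_le R hb (U - D) D0.
  have : 0 <= (D + (U - D))%:R^-1 :> R by rewrite invr_ge0.
  set A := \sum_(_ <= _ < _) _; set u := (_ + _)%:R^-1; lra.
have hS2z := S2_le R hb D.
have hS2z0 : 0 <= \sum_(2 <= d < D.+1) (d%:R ^+ s)^-1 :> R.
  by apply: sumr_ge0 => d _; rewrite invr_ge0 exprn_ge0.
have hQ : 0 <= x%:R * y%:R * \sum_(2 <= d < D.+1) (d%:R ^+ s)^-1 - \sum_(2 <= d < D.+1) p d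
            <= D%:R * (x%:R + y%:R).
  rewrite mulr_sumr -sumrB; apply/andP; split.
    apply: sumr_ge0_nat => d /andP[d2 _]; rewrite subr_ge0.
    by apply: Fp; apply: leq_trans d2.
  apply: le_trans (_ : \sum_(2 <= d < D.+1) (x%:R + y%:R) <= _).
    apply: ler_sum_nat => d /andP[d2 _].
    by apply: Fq; apply: leq_trans d2.
  have XY1 : 0 <= x%:R + y%:R :> R by rewrite addr_ge0.
  rewrite sumr_const_nat -[_ *+ (_ - _)]mulr_natr [X in _ <= X]mulrC; apply: (ler_wpM2l XY1).
  by rewrite ler_nat subSS leq_subr.
have hE : `|\sum_(2 <= d < D.+1) a d - c * \sum_(2 <= d < D.+1) p d|
            <= t * \sum_(2 <= d < D.+1) p d.
  rewrite mulr_sumr -sumrB mulr_sumr.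
  apply: le_trans (ler_norm_sum _ _ _) _.
  rewrite big_nat_cond [X in _ <= X]big_nat_cond.
  by apply: ler_sum => d /andP[/andP[d2 dD] _]; apply: F4; rewrite d2 -ltnS.
have hw : 0 <= c * (zeta s - Z R b D) <= D%:R^-1.
  have h1 := Z_le_zeta R hb D; have h2 := zeta_le R hb D0.
  apply/andP; split; first by rewrite mulr_ge0 ?subr_ge0 // ltW // c_gt0.
  rewrite -[X in _ <= X]mul1r; apply: ler_pM.
  - exact: ltW c_gt0.
  - by rewrite subr_ge0.
  - exact: c_le1.
  - by move: h2; set z := zeta _; set Z0 := Z _ _ _; set e := _^-1; lra.
have key : (V b x y)%:R - c * x%:R * y%:R =
   x%:R * y%:R * (c * (zeta s - Z R b D))
   + c * (x%:R * y%:R * \sum_(2 <= d < D.+1) (d%:R ^+ s)^-1 - \sum_(2 <= d < D.+1) p d)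
   - (\sum_(2 <= d < D.+1) a d - c * \sum_(2 <= d < D.+1) p d)
   - \sum_(D.+1 <= d < U.+1) a d.
  rewrite (Z_split R b D0).
  have -> : (V b x y)%:R = x%:R * y%:R - \sum_(2 <= d < D.+1) a d - \sum_(D.+1 <= d < U.+1) a d.
    rewrite hid; set A := \sum_(2 <= _ < _) _; set T := \sum_(D.+1 <= _ < _) _; set v := (V b x y)%:R; lra.
  transitivity (x%:R * y%:R * (c * zeta s) - c * x%:R * y%:R - \sum_(2 <= d < D.+1) a d - \sum_(D.+1 <= d < U.+1) a d); last by ring.
  by rewrite cz mulr1; ring.
rewrite key.
move: hE; rewrite ler_norml => /andP[e1 e2].
case/andP: hT => T0 T1. case/andP: hQ => Q0 Q1. case/andP: hw => w0 w1.
have S2p0 : 0 <= \sum_(2 <= d < D.+1) p d by apply: sumr_ge0 => d _; rewrite ler0n.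
set S2z := \sum_(2 <= _ < _) _ ^- s in Q0 Q1 hS2z hS2z0 *.
set S2p := \sum_(2 <= _ < _) p _ in e1 e2 Q0 Q1 S2p0 *.
set S2a := \sum_(2 <= _ < _) a _ in e1 e2 *.
set T := \sum_(D.+1 <= _ < _) a _ in T0 T1 *.
set w := c * _ in w0 w1 *.
set Q := _ - S2p in Q0 Q1 *.
have b1 : x%:R * y%:R * w <= x%:R * y%:R * D%:R^-1 by apply: ler_wpM2l.
have b1' : 0 <= x%:R * y%:R * w by apply: mulr_ge0.
have b2 : c * Q <= 1 * Q by apply: ler_wpM2r => //; exact: c_le1.
have b2' : 0 <= c * Q by apply: mulr_ge0 => //; exact: ltW c_gt0.
have b3 : t * S2p <= t * (x%:R * y%:R * (3/4)).
  apply: ler_wpM2l => //; apply: le_trans (_ : x%:R * y%:R * S2z <= _).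
    by move: Q0; rewrite subr_ge0.
  exact: ler_wpM2l.
have b4 : 0 <= t * S2p by apply: mulr_ge0.
clearbody S2z S2p S2a T w Q.
set XY := x%:R * y%:R in b1 b1' b3 T1 *.
set iD := D%:R^-1 in b1 T1 *.
clearbody XY iD.
rewrite ler_norml; apply/andP; split; lra.
Qed.


Lemma P_mono t t' K : t <= t' -> P t K -> P t' K.
Proof.
move=> tt' h x y Kx Ky; apply: le_trans (h x y Kx Ky) _.
by rewrite -!mulrA; apply: ler_wpM2r => //; rewrite mulr_ge0.
Qed.

Lemma P0 : P 1 0.
Proof.
move=> x y _ _.
have h1 : ((V b x y)%:R : R) <= x%:R * y%:R by rewrite -natrM ler_nat V_le.
have h2 : 0 <= ((V b x y)%:R : R) by [].
have XY0 : 0 <= x%:R * y%:R :> R by rewrite mulr_ge0.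
have h3 : c * (x%:R * y%:R) <= 1 * (x%:R * y%:R) by apply: ler_wpM2r => //; exact: c_le1.
have h4 : 0 <= c * (x%:R * y%:R) by rewrite mulr_ge0 // ltW // c_gt0.
rewrite !mulrA in h3 h4 *.
rewrite ler_norml; apply/andP; split; move: h1 h2 h3 h4 XY0;
  set v := (V b x y)%:R; set X := x%:R; set Y := y%:R; lra.
Qed.

Lemma P_improve t K : 0 < t -> P t K -> exists K', P (7/8 * t) K'.
Proof.
move=> t0 HP.
pose D := (Num.trunc (32 / t)).+2.
have hD : 32 / t < D%:R.
  apply: lt_le_trans (truncnS_gt _) _; rewrite ler_nat /D; exact: leqnSn.
rewrite ltr_pdivrMr // in hD.
pose M := (Num.trunc (32 * D%:R / t)).+1.
have hM : 32 * D%:R / t < M%:R by apply: truncnS_gt.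
rewrite ltr_pdivrMr // in hM.
exists (maxn (K * D ^ b) M) => x y hx hy.
rewrite geq_max in hx; rewrite geq_max in hy.
case/andP: hx => hx1 hx2; case/andP: hy => hy1 hy2.
have D2 : (2 <= D)%N by [].
have := step (ltW t0) HP D2 hx1 hy1.
have X0 : 0 <= x%:R :> R by [].
have Y0 : 0 <= y%:R :> R by [].
have D0 : 0 < D%:R :> R by rewrite ltr0n.
have XY0 : 0 <= x%:R * y%:R :> R by rewrite mulr_ge0.
have xM : M%:R <= x%:R :> R by rewrite ler_nat.
have yM : M%:R <= y%:R :> R by rewrite ler_nat.
have f1 : 2 * (x%:R * y%:R) / D%:R <= t / 16 * (x%:R * y%:R).
  rewrite ler_pdivrMr //.
  by move: hD XY0; set DD := D%:R; set XY := _ * y%:R; nra.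
have g1 : D%:R <= t / 32 * y%:R.
  by move: hM yM; set DD := D%:R; set MM := M%:R; set Y := y%:R; nra.
have g2 : D%:R <= t / 32 * x%:R.
  by move: hM xM; set DD := D%:R; set MM := M%:R; set X := x%:R; nra.
have f2 : D%:R * x%:R <= t / 32 * y%:R * x%:R by apply: ler_wpM2r.
have f3 : D%:R * y%:R <= t / 32 * x%:R * y%:R by apply: ler_wpM2r.
move: f1 f2 f3; set DD := D%:R; set X := x%:R; set Y := y%:R.
move=> f1 f2 f3 h; apply: le_trans h _.
rewrite mulrDr.
nra.
Qed.


Lemma P_iter k : exists K, P ((7/8) ^+ k) K.
Proof.
elim: k => [|k [K HK]]; first by exists 0%N; rewrite expr0; exact: P0.
have := P_improve _ HK; rewrite exprn_gt0 //; last by lra.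
by move=> /(_ isT) [K' HK']; exists K'; rewrite exprS.
Qed.

Lemma P_all e : 0 < e -> exists K, P e K.
Proof.
move=> e0.
have h78 : `|7/8 : R| < 1 by rewrite ger0_norm; lra.
have := cvg_expr h78; move/cvgrPdist_le => /(_ e e0) [k _ hk].
have := hk k (leqnn k); rewrite /= sub0r normrN ger0_norm ?exprn_ge0 //; last by lra.
move=> hke; have [K HK] := P_iter k; exists K; exact: P_mono hke HK.
Qed.

End Main.

Section Lam.
Local Open Scope nat_scope.
Local Close Scope classical_set_scope.
Variable b : nat.

Lemma card_prod_sum (m n : nat) (Q : nat -> nat -> bool) :
  #|[set p : 'I_m * 'I_n | Q p.1 p.2]| = \sum_(0 <= i < m) \sum_(0 <= j < n) (Q i j : nat).
Proof.
rewrite -sum1_card big_mkcond /=.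
rewrite (eq_bigr (fun p : 'I_m * 'I_n => (Q p.1 p.2 : nat))); last first.
  by move=> p _; rewrite inE; case: (Q _ _).
rewrite -(pair_bigA _ (fun (i : 'I_m) (j : 'I_n) => (Q i j : nat))) /= big_mkord.
by apply: eq_bigr => i _; rewrite big_mkord.
Qed.

Lemma sum_pt (m a : nat) (F : nat -> nat) :
  \sum_(0 <= i < m) F i * (i == a) = F a * (a < m).
Proof.
elim: m => [|m IH]; first by rewrite big_geq // muln0.
rewrite big_nat_recr //= IH.
case: (ltngtP a m) => [h|h|->].
- by rewrite (ltn_trans h (ltnSn m)) /= muln0 addn0.
- by rewrite ltnS leqNgt h /= !muln0.
- by rewrite ltnSn /= muln0 add0n.
Qed.

Lemma sum_pt2 (m n a c : nat) (F : nat -> nat -> nat) : a < m -> c < n ->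
  \sum_(0 <= i < m) \sum_(0 <= j < n) F i j * ((i == a) && (j == c)) = F a c.
Proof.
move=> am cn.
rewrite (eq_bigr (fun i => (\sum_(0 <= j < n) F i j * (j == c)) * (i == a))); last first.
  move=> i _; rewrite big_distrl /=; apply: eq_bigr => j _.
  by case: (i == a); case: (j == c); rewrite ?muln0 ?muln1.
rewrite sum_pt am muln1.
rewrite (eq_bigr (fun j => F a j * (j == c))) // sum_pt cn muln1 //.
Qed.

Definition vv n m : nat := [&& 0 < n, 0 < m & bvisible b n m].

Lemma Lambda_eq r s : 0 < r -> 0 < s ->
  Lambda b r s = vv r.-1 s + vv r.+1 s + vv r s.-1 + vv r s.+1.
Proof.
move=> r0 s0.
rewrite /Lambda (@card_prod_sum r.+2 s.+2 (fun i j => [&& 0 < i, 0 < j, bvisible b i j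
        & (`|(i : nat) - r|%N + `|(j : nat) - s|%N == 1)%N])).
have e : forall i j, ([&& 0 < i, 0 < j, bvisible b i j
        & (`|(i : nat) - r|%N + `|(j : nat) - s|%N == 1)%N] : nat) =
   vv i j * ((i == r.-1) && (j == s)) + vv i j * ((i == r.+1) && (j == s))
   + vv i j * ((i == r) && (j == s.-1)) + vv i j * ((i == r) && (j == s.+1)).
  move=> i j; rewrite /vv -!mulnDr.
  have H : ((`|(i : nat) - r|%N + `|(j : nat) - s|%N == 1)%N : nat) =
     ((i == r.-1) && (j == s)) + ((i == r.+1) && (j == s)) + ((i == r) && (j == s.-1)) + ((i == r) && (j == s.+1)).
    case: (_ == 1)%N / eqP => h; repeat (case: eqP => ? /=); lia.
  rewrite -H.
  by case: (0 < i); case: (0 < j); case: bvisible; case: (_ == 1)%N.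
rewrite (eq_bigr (fun i => \sum_(0 <= j < s.+2) (vv i j * ((i == r.-1) && (j == s)) + vv i j * ((i == r.+1) && (j == s))
   + vv i j * ((i == r) && (j == s.-1)) + vv i j * ((i == r) && (j == s.+1))))); last first.
  by move=> i _; apply: eq_bigr => j _; rewrite e.
under eq_bigr => i _ do rewrite !big_split /=.
rewrite !big_split /=.
have r1 : r.-1 < r.+2 by lia.
have s1 : s.-1 < s.+2 by lia.
by rewrite !sum_pt2.
Qed.
End Lam.

Section Fin.
Variable R : realType.

Lemma tele (G : nat -> R) N : (forall k, 0 <= G k <= 1) ->
  `|\sum_(1 <= k < N.+1) G k.+1 - \sum_(1 <= k < N.+1) G k| <= 1.
Proof.
move=> hG; rewrite -sumrB telescope_sumr //.
have := hG N.+1; have := hG 1%N.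
move=> /andP[h1 h2] /andP[h3 h4]; rewrite ler_norml; apply/andP; split; lra.
Qed.

Lemma tele' (G : nat -> R) N : (forall k, 0 <= G k <= 1) ->
  `|\sum_(1 <= k < N.+1) G k - \sum_(1 <= k < N.+1) G k.+1| <= 1.
Proof. by move=> hG; rewrite distrC; apply: tele. Qed.

Lemma outer (A B : nat -> R) N : (forall s, `|A s - B s| <= 1) ->
  `|\sum_(1 <= s < N.+1) A s - \sum_(1 <= s < N.+1) B s| <= N%:R.
Proof.
move=> h; rewrite -sumrB; apply: le_trans (ler_norm_sum _ _ _) _.
apply: le_trans (ler_sum _ (fun s _ => h s)) _.
by rewrite sumr_const_nat subn1 /=.
Qed.


Lemma sumLambda b N : (0 < b)%N ->
  `|\sum_(1 <= r < N.+1) \sum_(1 <= s < N.+1) ((Lambda b r s)%:R : R) - 4 * (V b N N)%:R| <= 4 * N%:R.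
Proof.
move=> hb.
pose f n m := ((vv b n m)%:R : R).
have hf n m : 0 <= f n m <= 1 by rewrite /f ler0n /= lern1 leq_b1.
have e1 : \sum_(1 <= r < N.+1) \sum_(1 <= s < N.+1) ((Lambda b r s)%:R : R) =
   \sum_(1 <= r < N.+1) \sum_(1 <= s < N.+1) f r.-1 s
 + \sum_(1 <= r < N.+1) \sum_(1 <= s < N.+1) f r.+1 s
 + \sum_(1 <= r < N.+1) \sum_(1 <= s < N.+1) f r s.-1
 + \sum_(1 <= r < N.+1) \sum_(1 <= s < N.+1) f r s.+1.
  rewrite -!big_split /=; apply: eq_big_nat => r /andP[r1 _].
  rewrite -!big_split /=; apply: eq_big_nat => s /andP[s1 _].
  by rewrite Lambda_eq // !natrD.
have eW : (V b N N)%:R = \sum_(1 <= r < N.+1) \sum_(1 <= s < N.+1) f r s.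
  rewrite /V natr_sum; apply: eq_big_nat => r /andP[r1 _].
  rewrite natr_sum; apply: eq_big_nat => s /andP[s1 _].
  by rewrite /f /vv r1 s1.
have h1 : `|\sum_(1 <= r < N.+1) \sum_(1 <= s < N.+1) f r.-1 s - (V b N N)%:R| <= N%:R.
  rewrite eW exchange_big_nat [X in _ - X]exchange_big_nat; apply: outer => s.
  by have := tele' N (fun k => hf k.-1 s).
have h2 : `|\sum_(1 <= r < N.+1) \sum_(1 <= s < N.+1) f r.+1 s - (V b N N)%:R| <= N%:R.
  rewrite eW exchange_big_nat [X in _ - X]exchange_big_nat; apply: outer => s.
  by have := tele N (fun k => hf k s).
have h3 : `|\sum_(1 <= r < N.+1) \sum_(1 <= s < N.+1) f r s.-1 - (V b N N)%:R| <= N%:R.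
  rewrite eW; apply: outer => r.
  by have := tele' N (fun k => hf r k.-1).
have h4 : `|\sum_(1 <= r < N.+1) \sum_(1 <= s < N.+1) f r s.+1 - (V b N N)%:R| <= N%:R.
  rewrite eW; apply: outer => r.
  by have := tele N (fun k => hf r k).
rewrite e1.
move: h1 h2 h3 h4.
set A1 := \sum_(1 <= r < N.+1) \sum_(1 <= s < N.+1) f r.-1 s.
set A2 := \sum_(1 <= r < N.+1) \sum_(1 <= s < N.+1) f r.+1 s.
set A3 := \sum_(1 <= r < N.+1) \sum_(1 <= s < N.+1) f r s.-1.
set A4 := \sum_(1 <= r < N.+1) \sum_(1 <= s < N.+1) f r s.+1.
set W := (V b N N)%:R; set NN := N%:R.
rewrite !ler_norml => /andP[g1 g2] /andP[g3 g4] /andP[g5 g6] /andP[g7 g8].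
apply/andP; split; lra.
Qed.

End Fin.

Unset Implicit Arguments.

Theorem mainTheorem7 (R : realType) (b : nat) (hb : (1 <= b)%N) :
  (@mean_seq R b) @ \oo --> 4 / zeta (b.+1).
Proof.
apply/cvgrPdist_le => e e0.
have e80 : 0 < e / 8 by rewrite divr_gt0.
have [K HK] := P_all hb e80.
pose M := (Num.trunc (8 / e)).+1.
have hM : 8 / e < M%:R by apply: truncnS_gt.
rewrite ltr_pdivrMr // in hM.
apply: filterS (nbhs_infty_ge (maxn (maxn K M) 1)) => N.
rewrite /= !geq_max => /andP[/andP[KN MN] N1].
have hV := HK N N KN KN.
have hL := sumLambda R N hb.
have NN0 : 0 < N%:R :> R by rewrite ltr0n.
have hMN : M%:R <= N%:R :> R by rewrite ler_nat.
have f1 : 8 * N%:R <= e * N%:R * N%:R :> R.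
  have : 8 <= e * N%:R :> R by move: hM hMN; set MM := M%:R; set NN := N%:R; nra.
  by move=> h; rewrite -mulrA [X in _ <= X]mulrA; apply: ler_wpM2r => //; apply: ltW.
rewrite /mean_seq.
have -> : 4 / zeta b.+1 - (N%:R ^+ 2)^-1 * \sum_(1 <= r < N.+1) \sum_(1 <= s < N.+1) ((Lambda b r s)%:R : R)
   = (4 * c R b * (N%:R * N%:R) - \sum_(1 <= r < N.+1) \sum_(1 <= s < N.+1) ((Lambda b r s)%:R : R)) / (N%:R * N%:R).
  rewrite /c expr2; field.
  by rewrite gt_eqF // gt_eqF // zeta_pos.
rewrite normrM normfV (@ger0_norm _ (N%:R * N%:R)); last by rewrite mulr_ge0.
rewrite ler_pdivrMr ?mulr_gt0 //.
move: hV hL f1.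
set L := \sum_(1 <= r < N.+1) _.
set V0 := (V b N N)%:R; set NN := N%:R; set cc := c R b.
rewrite !ler_norml => /andP[g1 g2] /andP[g3 g4] f1.
apply/andP; split; lra.
Qed.
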